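(* Let $K$ be $(\kappa,\gamma)$-strongly stable. Let $\{M_t\}_{t=-H-1}^0$ be arbitrary with $M_t\in\mathcal M$, and let $\{M_t\}_{t=1}^{T-1}$ be generated by projected online gradient descent with constant learning rate $\eta>0$: $M_{t+1}=\Pi_{\mathcal M}(M_t-\eta\nabla_Mf_t(M_t))$, where $\Pi_{\mathcal M}(X)=\arg\min_{M'\in\mathcal M}\|X-M'\|_F$. Assume there is $L_c>0$ such that for every $k\in[0,H+1]$, $t\in[0,T-1]$ and $M_{t-1-H},\dots,M_t,\check M_{t-k}\in\mathcal M$, $$|F_t(M_{t-1-H:t})-F_t(M_{t-1-H:t-k-1},\check M_{t-k},M_{t-k+1:t})|\le L_c\|M_{t-k}-\check M_{t-k}\|_F.$$ Then, with $D:=\frac{4\kappa_B\kappa^3\sqrt n}{\gamma}$, for every $M\in\mathcal M$, $$\sum_{t=0}^{T-1}F_t(M_{t-1-H:t})-\sum_{t=0}^{T-1}f_t(M)\le L_c\eta\sum_{t=0}^{T-1}\sum_{i=1}^{\min\{H+1,t\}}\sum_{k=1}^i\|\nabla_Mf_{t-k}(M_{t-k})\|_F+\frac{D^2}{2\eta}+\frac\eta2\sum_{t=0}^{T-1}\|\nabla_Mf_t(M_t)\|_F^2.$$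
   Context: Linear system $x_{t+1}=Ax_t+Bu_t+w_t$; $n:=\max\{n_x,n_u\}$, $\kappa_B:=\max\{\|B\|,1\}$; $w_s:=0$ for $s<0$; $H$ a positive integer. $(\kappa,\gamma)$-strong stability: complex $P,Q$ with $A-BK=QPQ^{-1}$, $\|P\|\le1-\gamma$, $\|K\|,\|Q\|,\|Q^{-1}\|\le\kappa$. $A_K:=A-BK$. For $M=\{M^{[0]},\dots,M^{[H-1]}\}$, $\|M\|_F:=\|[M^{[0]},\dots,M^{[H-1]}]\|_F$. $\mathcal M:=\{M:\|M^{[i]}\|\le2\kappa_B\kappa^3(1-\gamma)^i\}$. Surrogate: $\Psi^{K,h}_{t,i}(M_{t-h:t}):=A_K^i\mathbf 1_{i\le h}+\sum_{j=0}^hA_K^jBM_{t-j}^{[i-j-1]}\mathbf 1_{i-j\in[1,H]}$; $y_t:=\sum_{i=0}^{2H}\Psi^{K,H}_{t-1,i}(M_{t-1-H:t-1})w_{t-1-i}$; $v_t:=-Ky_t+\sum_{i=1}^HM_t^{[i-1]}w_{t-i}$; $F_t(M_{t-1-H:t}):=c_t(y_t,v_t)$ for differentiable convex $c_t$; $f_t(M):=F_t(M,\dots,M)$. The statement holds for any fixed realization of the noise. *)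

(* Defs.v *)
From mathcomp Require Import all_boot all_order all_algebra.
From mathcomp Require Import all_classical all_reals all_analysis.
From mathcomp.real_closed Require Import complex.
Set Implicit Arguments.
Unset Strict Implicit.
Unset Printing Implicit Defensive.
Import Order.TTheory GRing.Theory Num.Theory.
Import numFieldNormedType.Exports.
Local Open Scope ring_scope.

Section LQCDefs.
Variable R : realType.

Definition vnorm {n} (x : 'cV[R]_n) : R := Num.sqrt (\sum_i x i 0 ^+ 2).
Definition opnorm {m n} (M : 'M[R]_(m, n)) : R :=
  sup [set vnorm (M *m x) | x in [set x : 'cV[R]_n | vnorm x <= 1]].

Definition cabs2 (z : R[i]) : R := complex.Re z ^+ 2 + complex.Im z ^+ 2.
Definition vnormC {n} (x : 'cV[R[i]]_n) : R := Num.sqrt (\sum_i cabs2 (x i 0)).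
Definition opnormC {m n} (M : 'M[R[i]]_(m, n)) : R :=
  sup [set vnormC (M *m x) | x in [set x : 'cV[R[i]]_n | vnormC x <= 1]].

Definition mxC {m n} (M : 'M[R]_(m, n)) : 'M[R[i]]_(m, n) :=
  map_mx (fun a => (a%:C)%C) M.

Definition strongly_stable {nx nu} (A : 'M[R]_nx) (B : 'M[R]_(nx, nu))
    (K : 'M[R]_(nu, nx)) (kappa gamma : R) : Prop :=
  0 < gamma /\
  exists P Q : 'M[R[i]]_nx,
    [/\ Q \in unitmx, mxC (A - B *m K) = Q *m P *m invmx Q &
        [/\ opnormC P <= 1 - gamma, opnorm K <= kappa,
             opnormC Q <= kappa & opnormC (invmx Q) <= kappa]].

Definition kappaB {nx nu} (B : 'M[R]_(nx, nu)) : R := Num.max (opnorm B) 1.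

Definition Mtype (nu nx H : nat) := {ffun 'I_H -> 'M[R]_(nu, nx)}.

(** M^[k] as a function of a natural index (0 outside [0, H-1];
    only used under the guards of the paper). *)
Definition Mcomp {nu nx H} (M : Mtype nu nx H) (k : nat) : 'M[R]_(nu, nx) :=
  match (insub k : option 'I_H) with Some i => M i | None => 0 end.

Definition frob {nu nx H} (M : Mtype nu nx H) : R :=
  Num.sqrt (\sum_(i < H) \sum_a \sum_b (M i a b) ^+ 2).
Definition frob_inner {nu nx H} (G X : Mtype nu nx H) : R :=
  \sum_(i < H) \sum_a \sum_b G i a b * X i a b.

Definition inMset {nx nu H} (B : 'M[R]_(nx, nu)) (kappa gamma : R)
    (M : Mtype nu nx H) : Prop :=
  forall i : 'I_H, opnorm (M i) <= 2 * kappaB B * kappa ^+ 3 * (1 - gamma) ^+ i.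

Definition Psi {nx nu H} (A : 'M[R]_nx) (B : 'M[R]_(nx, nu)) (K : 'M[R]_(nu, nx))
    (Ms : int -> Mtype nu nx H) (t : int) (h i : nat) : 'M[R]_nx :=
  (if (i <= h)%N then (A - B *m K) ^+ i else 0) +
  \sum_(j < h.+1)
     (if ((j < i) && (i - j <= H))%N
      then (A - B *m K) ^+ j *m B *m Mcomp (Ms (t - j%:Z)) (i - j - 1)
      else 0).

Definition ysur {nx nu H} (A : 'M[R]_nx) (B : 'M[R]_(nx, nu)) (K : 'M[R]_(nu, nx))
    (w : int -> 'cV[R]_nx) (Ms : int -> Mtype nu nx H) (t : int) : 'cV[R]_nx :=
  \sum_(i < (2 * H).+1) Psi A B K Ms (t - 1) H i *m w (t - 1 - i%:Z).

(** v_t = -K y_t + sum_{i=1}^H M_t^[i-1] w_{t-i} (reindexed i -> i+1). *)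
Definition vsur {nx nu H} (A : 'M[R]_nx) (B : 'M[R]_(nx, nu)) (K : 'M[R]_(nu, nx))
    (w : int -> 'cV[R]_nx) (Ms : int -> Mtype nu nx H) (t : int) : 'cV[R]_nu :=
  - (K *m ysur A B K w Ms t) + \sum_(i < H) Ms t i *m w (t - (i.+1)%:Z).

Definition Fsur {nx nu H} (A : 'M[R]_nx) (B : 'M[R]_(nx, nu)) (K : 'M[R]_(nu, nx))
    (w : int -> 'cV[R]_nx) (c : int -> 'cV[R]_nx * 'cV[R]_nu -> R)
    (t : int) (Ms : int -> Mtype nu nx H) : R :=
  c t (ysur A B K w Ms t, vsur A B K w Ms t).

Definition fsur {nx nu H} (A : 'M[R]_nx) (B : 'M[R]_(nx, nu)) (K : 'M[R]_(nu, nx))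
    (w : int -> 'cV[R]_nx) (c : int -> 'cV[R]_nx * 'cV[R]_nu -> R)
    (t : int) (M : Mtype nu nx H) : R :=
  Fsur A B K w c t (fun _ => M).

Definition upd {T : Type} (Ms : int -> T) (s : int) (X : T) : int -> T :=
  fun r => if r == s then X else Ms r.

Definition is_gradient {nu nx H} (f : Mtype nu nx H -> R) (M G : Mtype nu nx H) : Prop :=
  forall X : Mtype nu nx H,
    is_derive (0 : R) (1 : R) (fun s : R => f (M + s *: X)) (frob_inner G X).

Definition is_proj {nx nu H} (B : 'M[R]_(nx, nu)) (kappa gamma : R)
    (X Y : Mtype nu nx H) : Prop :=
  inMset B kappa gamma Y /\
  forall M', inMset B kappa gamma M' -> frob (X - Y) <= frob (X - M').

Definition convex_fun {V : lmodType R} (f : V -> R) : Prop :=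
  forall (x y : V) (a : R), 0 <= a <= 1 ->
    f (a *: x + (1 - a) *: y) <= a * f x + (1 - a) * f y.

End LQCDefs.

(* Main.v *)
Require Import Defs.
From mathcomp Require Import all_boot all_order all_algebra.
From mathcomp Require Import all_classical all_reals all_analysis.
From mathcomp.real_closed Require Import complex.
From mathcomp Require Import ring lra zify.
Import Order.TTheory GRing.Theory Num.Theory.
Import numFieldNormedType.Exports.
Local Open Scope ring_scope.

Section S.
Variable R : realType.

Lemma convex_deriv (phi : R -> R) d :
  (forall s1 s2 a : R, 0 <= a <= 1 -> phi (a * s1 + (1 - a) * s2) <= a * phi s1 + (1 - a) * phi s2) ->
  is_derive (0:R) (1:R) phi d -> d <= phi 1 - phi 0.
Proof.
move=> cv [dv <-].
apply: limr_le => //.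
near=> h.
have hn0 : h != 0 by near: h; exact: nbhs_dnbhs_neq.
have h1 : `|h| < 1 by near: h; exact: dnbhs0_lt.
have -> : (phi \o shift 0) h%:A = phi h.
  by rewrite /= /shift addr0 /GRing.scale /= mulr1.
rewrite /GRing.scale /=.
have [hp|hn] := ltrP 0 h.
  have := cv 1 0 h; rewrite mulr1 mulr0 addr0.
  have h1' : h <= 1 by move: h1; rewrite gtr0_norm // => /ltW.
  move=> /(_ _)/=; rewrite (ltW hp) h1' => /(_ isT) le.
  rewrite ler_pdivrMl //. lra.
have hlt : h < 0 by rewrite lt_neqAle hn0 hn.
have hm1 : -1 < h by move: h1; rewrite ltr0_norm // ltrNl.
set l := (1 - h)^-1.
have lp : 0 < 1 - h by lra.
have l0 : 0 <= l by rewrite invr_ge0 ltW.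
have l1 : l <= 1 by rewrite invr_le1 ?unitfE ?gt_eqF //; lra.
have := cv h 1 l; rewrite l0 l1 => /(_ isT).
have -> : l * h + (1 - l) * 1 = 0.
  rewrite /l; field; lra.
move=> le.
rewrite ler_ndivrMl //.
have : (1 - h) * phi 0 <= phi h - h * phi 1.
  have e : (1 - h) * (l * phi h + (1 - l) * phi 1) = phi h - h * phi 1.
    rewrite /l; field; lra.
  rewrite -e; rewrite ler_pM2l //.
lra.
Unshelve. all: by end_near.
Qed.
End S.

Section S.
Context {R : realType}.

Lemma cs_sq {I : finType} (F G : I -> R) :
  (\sum_i F i * G i) ^+ 2 <= (\sum_i F i ^+ 2) * (\sum_i G i ^+ 2).
Proof.
set a := \sum_i F i ^+ 2; set b := \sum_i F i * G i; set c := \sum_i G i ^+ 2.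
have a0 : 0 <= a by apply: sumr_ge0 => i _; exact: sqr_ge0.
have c0 : 0 <= c by apply: sumr_ge0 => i _; exact: sqr_ge0.
have key : forall s, 0 <= a - 2 * s * b + s ^+ 2 * c.
  move=> s.
  have -> : a - 2 * s * b + s ^+ 2 * c = \sum_i (F i - s * G i) ^+ 2.
    rewrite /a /b /c !mulr_sumr -sumrN -!big_split /=.
    apply: eq_bigr => i _; ring.
  by apply: sumr_ge0 => i _; exact: sqr_ge0.
have [cp|] := ltrP 0 c.
  have := key (b / c).
  have -> : a - 2 * (b / c) * b + (b / c) ^+ 2 * c = a - b ^+ 2 / c.
    field; lra.
  by rewrite subr_ge0 ler_pdivrMr // mulrC.
move=> cle; have c00 : c = 0 by lra.
have b0 : b = 0.
  apply/eqP; apply/negPn/negP => bn0.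
  have := key ((a + 1) / (2 * b)).
  rewrite c00 mulr0 addr0.
  have -> : 2 * ((a + 1) / (2 * b)) * b = a + 1 by field; rewrite bn0 /=; lra.
  lra.
by rewrite b0 c00; lra.
Qed.

Definition en {I : finType} (F : I -> R) := Num.sqrt (\sum_i F i ^+ 2).

Lemma en_ge0 {I : finType} (F : I -> R) : 0 <= en F.
Proof. exact: sqrtr_ge0. Qed.

Lemma en_sq {I : finType} (F : I -> R) : en F ^+ 2 = \sum_i F i ^+ 2.
Proof. by rewrite sqr_sqrtr //; apply: sumr_ge0 => i _; exact: sqr_ge0. Qed.

Lemma cs {I : finType} (F G : I -> R) : \sum_i F i * G i <= en F * en G.
Proof.
have := cs_sq F G; rewrite -!en_sq -exprMn => h.
apply: le_trans (ler_norm _) _.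
rewrite -(ger0_norm (mulr_ge0 (en_ge0 F) (en_ge0 G))).
by rewrite -ler_sqr ?normr_ge0 // !real_normK ?num_real.
Qed.

Lemma en_triangle {I : finType} (F G : I -> R) :
  en (fun i => F i + G i) <= en F + en G.
Proof.
have h0 : 0 <= en F + en G by rewrite addr_ge0 ?en_ge0.
rewrite -ler_sqr ?nnegrE ?en_ge0 //.
rewrite en_sq.
have -> : \sum_i (F i + G i) ^+ 2 = \sum_i F i ^+ 2 + 2 * \sum_i F i * G i + \sum_i G i ^+ 2.
  rewrite mulr_sumr -!big_split /=; apply: eq_bigr => i _; ring.
rewrite -!en_sq.
have := cs F G; nra.
Qed.

Lemma en_scale {I : finType} (a : R) (F : I -> R) :
  en (fun i => a * F i) = `|a| * en F.
Proof.
rewrite /en.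
have -> : \sum_i (a * F i) ^+ 2 = a ^+ 2 * \sum_i F i ^+ 2.
  rewrite mulr_sumr; apply: eq_bigr => i _; ring.
by rewrite sqrtrM ?sqr_ge0 // sqrtr_sqr.
Qed.

Lemma en_ext {I : finType} (F G : I -> R) : F =1 G -> en F = en G.
Proof. by move=> e; rewrite /en; apply: congr1; apply: eq_bigr => i _; rewrite e. Qed.

End S.

Section S.
Context {R : realType}.
Context {nu nx H : nat}.
Implicit Types X Y G : Mtype R nu nx H.

Definition fl X (p : ('I_H * 'I_nu) * 'I_nx) : R := X p.1.1 p.1.2 p.2.

Lemma frobE X : frob X = en (fl X).
Proof. by rewrite /frob /en !pair_bigA. Qed.

Lemma fiE G X : frob_inner G X = \sum_p fl G p * fl X p.
Proof. by rewrite /frob_inner !pair_bigA. Qed.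

Lemma flD X Y p : fl (X + Y) p = fl X p + fl Y p.
Proof. by rewrite /fl !ffunE !mxE. Qed.
Lemma flZ a X p : fl (a *: X) p = a * fl X p.
Proof. by rewrite /fl !ffunE !mxE. Qed.
Lemma flN X p : fl (- X) p = - fl X p.
Proof. by rewrite /fl !ffunE !mxE. Qed.
Lemma flB X Y p : fl (X - Y) p = fl X p - fl Y p.
Proof. by rewrite flD flN. Qed.

Lemma frob_ge0 X : 0 <= frob X.
Proof. exact: sqrtr_ge0. Qed.

Lemma frob_sq X : frob X ^+ 2 = frob_inner X X.
Proof. by rewrite frobE en_sq fiE; apply: eq_bigr => p _; rewrite expr2. Qed.

Lemma frobD X Y : frob (X + Y) <= frob X + frob Y.
Proof.
rewrite !frobE (@en_ext _ _ _ (fun p => fl X p + fl Y p)); first exact: en_triangle.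
by move=> p; rewrite flD.
Qed.

Lemma frobZ a X : frob (a *: X) = `|a| * frob X.
Proof.
rewrite !frobE -en_scale; apply: en_ext => p; exact: flZ.
Qed.

Lemma frobN X : frob (- X) = frob X.
Proof. by rewrite -scaleN1r frobZ normrN normr1 mul1r. Qed.

Lemma frobC X Y : frob (X - Y) = frob (Y - X).
Proof. by rewrite -frobN opprB. Qed.

Lemma fiC G X : frob_inner G X = frob_inner X G.
Proof. by rewrite !fiE; apply: eq_bigr => p _; rewrite mulrC. Qed.

Lemma fiDr G X Y : frob_inner G (X + Y) = frob_inner G X + frob_inner G Y.
Proof. by rewrite !fiE -big_split; apply: eq_bigr => p _; rewrite flD mulrDr. Qed.

Lemma fiZr a G X : frob_inner G (a *: X) = a * frob_inner G X.
Proof. by rewrite !fiE mulr_sumr; apply: eq_bigr => p _; rewrite flZ mulrCA. Qed.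

Lemma fiNr G X : frob_inner G (- X) = - frob_inner G X.
Proof. by rewrite -scaleN1r fiZr mulN1r. Qed.

Lemma fiBr G X Y : frob_inner G (X - Y) = frob_inner G X - frob_inner G Y.
Proof. by rewrite fiDr fiNr. Qed.

Lemma frob_sqD X Y : frob (X + Y) ^+ 2 = frob X ^+ 2 + 2 * frob_inner X Y + frob Y ^+ 2.
Proof.
rewrite !frob_sq fiDr fiC fiDr fiC (fiC (X + Y)) fiDr (fiC Y X); ring.
Qed.

Lemma frob_sqB X Y : frob (X - Y) ^+ 2 = frob X ^+ 2 - 2 * frob_inner X Y + frob Y ^+ 2.
Proof. by rewrite frob_sqD fiNr frobN; ring. Qed.

End S.

Section S.
Context {R : realType}.

Lemma vnormE {n} (x : 'cV[R]_n) : vnorm x = en (fun i => x i 0).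
Proof. by []. Qed.

Lemma vnorm_ge0 {n} (x : 'cV[R]_n) : 0 <= vnorm x.
Proof. exact: sqrtr_ge0. Qed.

Lemma vnormD {n} (x y : 'cV[R]_n) : vnorm (x + y) <= vnorm x + vnorm y.
Proof.
rewrite !vnormE (@en_ext _ _ _ (fun i => x i 0 + y i 0)); first exact: en_triangle.
by move=> i; rewrite mxE.
Qed.

Lemma vnormZ {n} a (x : 'cV[R]_n) : vnorm (a *: x) = `|a| * vnorm x.
Proof. rewrite !vnormE -en_scale; apply: en_ext => i; by rewrite mxE. Qed.

Lemma vnorm0 {n} : vnorm (0 : 'cV[R]_n) = 0.
Proof.
rewrite /vnorm (eq_bigr (fun _ => 0)) ?big1 ?sqrtr0 // => i _; by rewrite mxE expr0n.
Qed.

Lemma vnorm_mul_bound {m n} (M : 'M[R]_(m, n)) (x : 'cV[R]_n) : vnorm x <= 1 ->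
  vnorm (M *m x) <= Num.sqrt (\sum_i \sum_j M i j ^+ 2).
Proof.
move=> hx; apply: ler_wsqrtr; apply: ler_sum => i _.
rewrite mxE.
apply: le_trans (cs_sq (fun j => M i j) (fun j => x j 0)) _.
rewrite -[X in _ * X]en_sq -vnormE.
have h0 : 0 <= \sum_j M i j ^+ 2 by apply: sumr_ge0 => j _; exact: sqr_ge0.
have h1 : vnorm x ^+ 2 <= 1 by rewrite -(expr1n _ 2) ler_pXn2r // ?nnegrE ?vnorm_ge0.
by rewrite -[leRHS]mulr1 ler_wpM2l.
Qed.

Lemma opnorm_hasub {m n} (M : 'M[R]_(m, n)) :
  has_ubound [set vnorm (M *m x) | x in [set x : 'cV[R]_n | vnorm x <= 1]].
Proof.
exists (Num.sqrt (\sum_i \sum_j M i j ^+ 2)) => y [x hx <-].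
exact: vnorm_mul_bound.
Qed.

Lemma opnorm_ub {m n} (M : 'M[R]_(m, n)) (x : 'cV[R]_n) : vnorm x <= 1 ->
  vnorm (M *m x) <= opnorm M.
Proof. by move=> hx; rewrite /opnorm; apply: (ub_le_sup (opnorm_hasub M)); exists x. Qed.

Lemma opnorm_ge0 {m n} (M : 'M[R]_(m, n)) : 0 <= opnorm M.
Proof.
have := opnorm_ub M 0; rewrite vnorm0 mulmx0 vnorm0; apply; exact: ler01.
Qed.

Lemma opnorm_le {m n} (M : 'M[R]_(m, n)) b :
  (forall x : 'cV[R]_n, vnorm x <= 1 -> vnorm (M *m x) <= b) -> opnorm M <= b.
Proof.
move=> hb; rewrite /opnorm; apply: ge_sup.
  by exists (vnorm (M *m 0)); exists 0 => //=; rewrite vnorm0 ler01.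
by move=> y [x hx <-]; exact: hb.
Qed.

Lemma opnorm_comb {m n} a b (P Q : 'M[R]_(m, n)) :
  opnorm (a *: P + b *: Q) <= `|a| * opnorm P + `|b| * opnorm Q.
Proof.
apply: opnorm_le => x hx.
rewrite mulmxDl -!scalemxAl.
apply: le_trans (vnormD _ _) _; rewrite !vnormZ.
apply: lerD; apply: ler_wpM2l; rewrite ?normr_ge0 //; exact: opnorm_ub.
Qed.

Lemma colbound {m n} (X : 'M[R]_(m, n)) :
  \sum_a \sum_b X a b ^+ 2 <= n%:R * opnorm X ^+ 2.
Proof.
rewrite exchange_big /=.
have -> : n%:R * opnorm X ^+ 2 = \sum_(b < n) opnorm X ^+ 2 by rewrite sumr_const card_ord mulr_natl.
apply: ler_sum => b _.
have hd : vnorm (delta_mx b 0 : 'cV[R]_n) = 1.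
  rewrite /vnorm (bigD1 b) //= big1 ?addr0 ?mxE ?eqxx /= ?expr1n ?sqrtr1 //.
  by move=> i /negbTE ib; rewrite mxE ib /= expr0n.
have := opnorm_ub X (delta_mx b 0); rewrite hd lexx => /(_ isT).
rewrite -colE => h.
have -> : \sum_a X a b ^+ 2 = vnorm (col b X) ^+ 2.
  by rewrite /vnorm sqr_sqrtr ?sumr_ge0 //; [apply: eq_bigr => i _; rewrite mxE | move=> i _; exact: sqr_ge0].
by rewrite ler_pXn2r // ?nnegrE ?vnorm_ge0 ?opnorm_ge0.
Qed.

Lemma opnormC_ge0 {m n} (M : 'M[R[i]]_(m, n)) : 0 <= opnormC M.
Proof.
rewrite /opnormC.
have [hs|hs] := pselect (has_sup [set vnormC (M *m x) | x in [set x : 'cV[R[i]]_n | vnormC x <= 1]]).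
  have h0 : forall k, vnormC (0 : 'cV[R[i]]_k) = 0.
    move=> k; rewrite /vnormC (eq_bigr (fun _ => 0)) ?big1 ?sqrtr0 // => i _.
    by rewrite mxE /cabs2 /= expr0n /= addr0.
  have e : vnormC (M *m (0:'cV[R[i]]_n)) = 0 by rewrite mulmx0 h0.
  rewrite -e; apply: (ub_le_sup hs.2); exists 0 => //.
  by rewrite /= h0 ler01.
by rewrite (sup_out hs).
Qed.
End S.

Ltac meq := apply/ffunP => ?; apply/matrixP => ? ?; rewrite !ffunE !mxE; ring.

Section S.
Context {R : realType} {nx nu H : nat}.
Implicit Types X Y M P Q : Mtype R nu nx H.
Variables (B : 'M[R]_(nx, nu)) (kappa gamma : R).

Lemma inM_comb P Q a : 0 <= a <= 1 -> inMset B kappa gamma P -> inMset B kappa gamma Q ->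
  inMset B kappa gamma (a *: P + (1 - a) *: Q).
Proof.
move=> /andP[a0 a1] hP hQ i; rewrite !ffunE.
apply: le_trans (opnorm_comb _ _ _ _) _.
rewrite ger0_norm // ger0_norm ?subr_ge0 //.
have := hP i; have := hQ i.
set b := 2 * _ * _ * _ => h1 h2.
have a1' : 0 <= 1 - a by rewrite subr_ge0.
apply: le_trans (lerD (ler_wpM2l a0 h2) (ler_wpM2l a1' h1)) _.
by rewrite -mulrDl addrC subrK mul1r.
Qed.

Lemma proj_le X Y M : is_proj B kappa gamma X Y -> inMset B kappa gamma M ->
  frob (Y - M) <= frob (X - M).
Proof.
move=> [hY hmin] hM.
set d := X - Y; set e := M - Y.
have key : forall a, 0 < a <= 1 -> 2 * a * frob_inner d e <= a ^+ 2 * frob e ^+ 2.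
  move=> a /andP[a0 a1].
  have hZ : inMset B kappa gamma (a *: M + (1 - a) *: Y).
    by apply: inM_comb => //; rewrite (ltW a0) a1.
  have := hmin _ hZ.
  have -> : X - (a *: M + (1 - a) *: Y) = d + (- a) *: e by rewrite /d /e; meq.
  move=> h.
  have : frob d ^+ 2 <= frob (d + (- a) *: e) ^+ 2.
    by rewrite ler_pXn2r // ?nnegrE ?frob_ge0.
  rewrite frob_sqD frobZ fiZr exprMn normrN real_normK ?num_real //.
  lra.
have hp : frob_inner d e <= 0.
  rewrite leNgt; apply/negP => pp.
  set p := frob_inner d e in key pp *.
  set q := frob e ^+ 2 in key.
  have q0 : 0 <= q by rewrite /q sqr_ge0.
  have pq : 0 < p + q by lra.
  have := key (p / (p + q)).
  have a0 : 0 < p / (p + q) by rewrite divr_gt0.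
  have a1 : p / (p + q) <= 1 by rewrite ler_pdivrMr // mul1r; lra.
  rewrite a0 a1 => /(_ isT).
  set a := p / (p + q) in a0 a1 *.
  move=> h.
  have h2 : a * (2 * p) <= a * (a * q).
    have -> : a * (2 * p) = 2 * a * p by ring.
    by have -> : a * (a * q) = a ^+ 2 * q by ring.
  have : 2 * p <= a * q by rewrite -(ler_pM2l a0).
  have : a * q <= p.
    rewrite mulrAC ler_pdivrMr // ler_pM2l //; lra.
  lra.
have hXM : X - M = d - e by rewrite /d /e; meq.
have : frob (Y - M) ^+ 2 <= frob (X - M) ^+ 2.
  rewrite hXM (frob_sqB d e) (frobC Y M) -/e.
  have := sqr_ge0 (frob d); lra.
by rewrite ler_pXn2r // ?nnegrE ?frob_ge0.
Qed.


Lemma diam P Q : 0 < gamma <= 1 -> inMset B kappa gamma P -> inMset B kappa gamma Q ->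
  (0 < H)%N ->
  frob (P - Q) ^+ 2 <=
  (4 * kappaB B * kappa ^+ 3 * Num.sqrt ((maxn nx nu)%:R) / gamma) ^+ 2.
Proof.
move=> /andP[g0 g1] hP hQ H0.
set c := kappaB B * kappa ^+ 3.
have c0 : 0 <= c.
  have := hP (Ordinal H0); rewrite /= expr0 mulr1 => h.
  have := le_trans (opnorm_ge0 _) h; rewrite /c; lra.
set q := (1 - gamma) ^+ 2.
set S := \sum_(i < H) q ^+ i.
have S0 : 0 <= S by apply: sumr_ge0 => i _; rewrite exprn_ge0 // /q sqr_ge0.
have q0 : 0 <= q by rewrite /q sqr_ge0.
have hq : gamma ^+ 2 <= 1 - q by rewrite /q; nra.
have hS : (1 - q) * S <= 1.
  have := subrX1 q H; rewrite -/S => e.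
  have : (1 - q) * S = 1 - q ^+ H by rewrite -[1 - q]opprB mulNr -e opprB.
  move=> ->; rewrite lerBlDr lerDl; exact: exprn_ge0.
have hSg : gamma ^+ 2 * S <= 1.
  apply: le_trans hS; exact: ler_wpM2r.
have step : frob (P - Q) ^+ 2 <= 16 * c ^+ 2 * nx%:R * S.
  rewrite /frob sqr_sqrtr; last first.
    by apply: sumr_ge0 => i _; apply: sumr_ge0 => a _; apply: sumr_ge0 => b _; exact: sqr_ge0.
  rewrite /S !mulr_sumr; apply: ler_sum => i _.
  apply: le_trans (colbound _) _.
  have hi : opnorm ((P - Q) i) <= 4 * c * (1 - gamma) ^+ i.
    rewrite !ffunE -scaleN1r -[P i]scale1r.
    apply: le_trans (opnorm_comb _ _ _ _) _.
    rewrite normrN normr1 !mul1r.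
    have := hP i; have := hQ i.
    have -> : 2 * kappaB B * kappa ^+ 3 * (1 - gamma) ^+ i = 2 * (c * (1 - gamma) ^+ i) by rewrite /c; ring.
    have -> : 4 * c * (1 - gamma) ^+ i = 4 * (c * (1 - gamma) ^+ i) by ring.
    lra.
  have h : opnorm ((P - Q) i) ^+ 2 <= 16 * c ^+ 2 * q ^+ i.
    have -> : 16 * c ^+ 2 * q ^+ i = (4 * c * (1 - gamma) ^+ i) ^+ 2.
      by rewrite /q -exprM mulnC exprM; ring.
    rewrite ler_pXn2r ?nnegrE ?opnorm_ge0 //.
    exact: le_trans (opnorm_ge0 _) hi.
  apply: le_trans (ler_wpM2l (ler0n _ nx) h) _.
  rewrite le_eqVlt; apply/orP; left; apply/eqP; ring.
apply: le_trans step _.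
have hn : (nx%:R : R) <= (maxn nx nu)%:R by rewrite ler_nat leq_maxl.
have hm : 0 <= ((maxn nx nu)%:R : R) by [].
have eD : (4 * kappaB B * kappa ^+ 3 * Num.sqrt ((maxn nx nu)%:R) / gamma) ^+ 2
    = 16 * c ^+ 2 * (maxn nx nu)%:R / gamma ^+ 2.
  rewrite /c expr_div_n; congr (_ / _); rewrite !exprMn sqr_sqrtr //; ring.
rewrite eD ler_pdivlMr ?exprn_gt0 //.
have h1 : 16 * c ^+ 2 * nx%:R * S * gamma ^+ 2 <= 16 * c ^+ 2 * nx%:R.
  rewrite -mulrA [S * _]mulrC; rewrite -[leRHS]mulr1; apply: ler_wpM2l.
    by apply: mulr_ge0; [apply: mulr_ge0; [|exact: sqr_ge0]|].

  by [].
apply: le_trans h1 _.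
by apply: ler_wpM2l => //; apply: mulr_ge0; [|exact: sqr_ge0].
Qed.

End S.


Section S.
Context {R : realType} {nx nu H : nat}.
Variables (A : 'M[R]_nx) (B : 'M[R]_(nx, nu)) (K : 'M[R]_(nu, nx))
  (w : int -> 'cV[R]_nx) (c : int -> 'cV[R]_nx * 'cV[R]_nu -> R).

Lemma Fsur_dep (t : nat) (N N' : int -> Mtype R nu nx H) :
  (forall s : int, s < 0 -> w s = 0) ->
  (forall s : int, 0 <= s -> t%:Z - 1 - H%:Z <= s -> s <= t%:Z -> N s = N' s) ->
  Fsur A B K w c t N = Fsur A B K w c t N'.
Proof.
move=> hw hN.
have hy : ysur A B K w N t = ysur A B K w N' t.
  rewrite /ysur; apply: eq_bigr => i _.
  case: (ltnP i t) => hi.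
    congr (_ *m _); rewrite /Psi; congr (_ + _); apply: eq_bigr => j _.
    case: ifP => // /andP [hji _].
    have hj := ltn_ord j.
    rewrite hN //; lia.
  by rewrite hw ?mulmx0 //; lia.
by rewrite /Fsur /vsur hy hN //; lia.
Qed.

Lemma Mcomp_lin (X Y : Mtype R nu nx H) a b k :
  Mcomp (a *: X + b *: Y) k = a *: Mcomp X k + b *: Mcomp Y k.
Proof.
by rewrite /Mcomp; case: insub => [i|]; [rewrite !ffunE | rewrite !scaler0 addr0].
Qed.

Lemma Psi_aff a b (X Y : Mtype R nu nx H) t h i : a + b = 1 ->
  Psi A B K (fun _ => a *: X + b *: Y) t h i =
  a *: Psi A B K (fun _ => X) t h i + b *: Psi A B K (fun _ => Y) t h i.
Proof.
move=> ab; rewrite /Psi !scalerDr.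
have eC : forall Cm : 'M[R]_nx, Cm = a *: Cm + b *: Cm by move=> Cm; rewrite -scalerDl ab scale1r.
rewrite addrACA -eC !scaler_sumr -big_split; congr (_ + _); apply: eq_bigr => j _.
case: ifP => _; first by rewrite Mcomp_lin mulmxDr !scalemxAr.
by apply/esym; rewrite !scaler0; exact: addr0.
Qed.

Lemma ysur_aff a b (X Y : Mtype R nu nx H) t : a + b = 1 ->
  ysur A B K w (fun _ => a *: X + b *: Y) t =
  a *: ysur A B K w (fun _ => X) t + b *: ysur A B K w (fun _ => Y) t.
Proof.
move=> ab; rewrite /ysur !scaler_sumr -big_split; apply: eq_bigr => i _.
by rewrite Psi_aff // mulmxDl !scalemxAl.
Qed.

Lemma vsur_aff a b (X Y : Mtype R nu nx H) t : a + b = 1 ->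
  vsur A B K w (fun _ => a *: X + b *: Y) t =
  a *: vsur A B K w (fun _ => X) t + b *: vsur A B K w (fun _ => Y) t.
Proof.
move=> ab; rewrite /vsur ysur_aff // mulmxDr -!scalemxAr opprD !scalerDr !scalerN addrACA.
congr (_ + _); rewrite !scaler_sumr -big_split; apply: eq_bigr => i _.
by rewrite !ffunE mulmxDl -!scalemxAl.
Qed.

Lemma fsur_conv t (X Y : Mtype R nu nx H) a : convex_fun (c t) -> 0 <= a <= 1 ->
  fsur A B K w c t (a *: X + (1 - a) *: Y) <=
  a * fsur A B K w c t X + (1 - a) * fsur A B K w c t Y.
Proof.
move=> hc ha; rewrite /fsur /Fsur ysur_aff ?vsur_aff ?subrKC //.
exact: (hc (ysur A B K w (fun _ => X) t, vsur A B K w (fun _ => X) t)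
            (ysur A B K w (fun _ => Y) t, vsur A B K w (fun _ => Y) t) a ha).
Qed.

End S.

Lemma grad_ineq {R : realType} {nu nx H} (f : Mtype R nu nx H -> R) (M0 G M : Mtype R nu nx H) :
  (forall X Y a, 0 <= a <= 1 -> f (a *: X + (1 - a) *: Y) <= a * f X + (1 - a) * f Y) ->
  is_gradient f M0 G -> f M0 - f M <= frob_inner G (M0 - M).
Proof.
move=> hf hg.
set phi := fun s : R => f (M0 + s *: (M - M0)).
have hphi : forall s1 s2 a : R, 0 <= a <= 1 ->
    phi (a * s1 + (1 - a) * s2) <= a * phi s1 + (1 - a) * phi s2.
  move=> s1 s2 a ha; rewrite /phi.
  have -> : M0 + (a * s1 + (1 - a) * s2) *: (M - M0) =
     a *: (M0 + s1 *: (M - M0)) + (1 - a) *: (M0 + s2 *: (M - M0)) by meq.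
  exact: hf.
have := @convex_deriv R phi _ hphi (hg (M - M0)).
rewrite /phi scale0r addr0 scale1r subrKC !fiBr => h.
lra.
Qed.


Lemma ar1 {R : realType} (a x y z u : R) : a <= x - z -> y <= z -> a + (y - u) <= x - u.
Proof. lra. Qed.
Lemma ar2 {R : realType} (a x u : R) : a <= x - u -> 0 <= u -> a <= x.
Proof. lra. Qed.

Theorem proposition2 (R : realType) (nx nu H T : nat)
  (A : 'M[R]_nx) (B : 'M[R]_(nx, nu)) (K : 'M[R]_(nu, nx))
  (kappa gamma eta Lc : R)
  (w : int -> 'cV[R]_nx) (c : int -> 'cV[R]_nx * 'cV[R]_nu -> R)
  (Ms : int -> Mtype R nu nx H) (g : int -> Mtype R nu nx H) :
  (0 < H)%N ->
  strongly_stable A B K kappa gamma ->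
  (forall s : int, s < 0 -> w s = 0) ->
  (forall (t : int) (z : 'cV[R]_nx * 'cV[R]_nu), differentiable (c t) z) ->
  (forall t : int, convex_fun (c t)) ->
  0 < eta ->
  (forall t : int, - (H%:Z + 1) <= t <= 0 -> inMset B kappa gamma (Ms t)) ->
  (forall t : nat, (t < T)%N -> is_gradient (fsur A B K w c t) (Ms t) (g t)) ->
  (forall t : nat, (t.+1 < T)%N ->
     is_proj B kappa gamma (Ms t - eta *: g t) (Ms (t.+1)%:Z)) ->
  0 < Lc ->
  (forall (k t : nat), (k <= H.+1)%N -> (t < T)%N ->
     forall (N : int -> Mtype R nu nx H) (Mc : Mtype R nu nx H),
       (forall s : int, t%:Z - 1 - H%:Z <= s <= t%:Z -> inMset B kappa gamma (N s)) ->
       inMset B kappa gamma Mc ->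
       `| Fsur A B K w c t N - Fsur A B K w c t (upd N (t%:Z - k%:Z) Mc) |
         <= Lc * frob (N (t%:Z - k%:Z) - Mc)) ->
  forall M : Mtype R nu nx H, inMset B kappa gamma M ->
  let D := 4 * kappaB B * kappa ^+ 3 * Num.sqrt ((maxn nx nu)%:R) / gamma in
  \sum_(t < T) Fsur A B K w c t Ms - \sum_(t < T) fsur A B K w c t M
  <= Lc * eta * \sum_(t < T) \sum_(1 <= i < (minn H.+1 t).+1)
                   \sum_(1 <= k < i.+1) frob (g (t%:Z - k%:Z))
     + D ^+ 2 / (2 * eta)
     + eta / 2 * \sum_(t < T) frob (g t) ^+ 2.
Proof.
move=> H0 hss hw _ hcv heta hinit hgrad hogd hLc hlip M hM; cbv zeta.
set D := 4 * kappaB B * _ * _ / gamma.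
have hg : 0 < gamma <= 1.
  case: hss => g0 [P [Q [_ _ [hP _ _ _]]]].
  have := opnormC_ge0 P; rewrite g0 /=; lra.
have inM : forall t : nat, (t < T)%N -> inMset B kappa gamma (Ms t).
  elim=> [|t IH] hT; first by apply: hinit; lia.
  exact: (hogd t hT).1.
have inMz : forall s : int, - (H%:Z + 1) <= s -> s < T%:Z -> inMset B kappa gamma (Ms s).
  move=> s h1 h2; have [hs|hs] := lerP s 0; first by apply: hinit; rewrite h1 hs.
  case: s h1 h2 hs => [n|n] h1 h2 hs; last by lia.
  by apply: inM; lia.
have step : forall s : nat, (s.+1 < T)%N -> frob (Ms s.+1 - Ms s) <= eta * frob (g s).
  move=> s hs.
  have := @proj_le _ _ _ _ B kappa gamma _ _ _ (hogd s hs) (inM s (ltnW hs)).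
  have -> : Ms s - eta *: g s - Ms s = - (eta *: g s) by rewrite addrAC subrr add0r.
  by rewrite frobN frobZ gtr0_norm.
have drift : forall t i : nat, (t < T)%N -> (i <= t)%N ->
    frob (Ms (t%:Z - i%:Z) - Ms t) <= eta * \sum_(1 <= k < i.+1) frob (g (t%:Z - k%:Z)).
  move=> t; elim=> [|i IH] hT hi.
    by rewrite subr0 subrr frobE /en big1 ?sqrtr0 ?big_geq ?mulr0 // => p _; rewrite /fl !ffunE !mxE expr0n.
  have e1 : t%:Z - i.+1%:Z = (t - i.+1)%N by lia.
  have e2 : t%:Z - i%:Z = (t - i.+1)%N.+1 by lia.
  rewrite big_nat_recr //= mulrDr.
  have := frobD (Ms (t%:Z - i.+1%:Z) - Ms (t%:Z - i%:Z)) (Ms (t%:Z - i%:Z) - Ms t).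
  have -> : Ms (t%:Z - i.+1%:Z) - Ms (t%:Z - i%:Z) + (Ms (t%:Z - i%:Z) - Ms t)
     = Ms (t%:Z - i.+1%:Z) - Ms t by rewrite addrA subrK.
  move=> h; apply: le_trans h _.
  rewrite addrC; apply: lerD; first exact: IH (ltnW hi).
  rewrite e1 e2 frobC; apply: step; lia.
have lip : forall t : nat, (t < T)%N ->
    Fsur A B K w c t Ms - fsur A B K w c t (Ms t)
    <= Lc * \sum_(1 <= i < (minn H.+1 t).+1) frob (Ms (t%:Z - i%:Z) - Ms t).
  move=> t hT.
  set m := minn H.+1 t.
  pose N (j : nat) := fun r : int =>
    if (t%:Z - j%:Z <= r) && (r < t%:Z) then Ms t else Ms r.
  have N0 : N 0%N = Ms.
    apply: funext => r; rewrite /N; case: ifP => // h; exfalso; lia.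
  have Nstep : forall j : nat, N j.+1 = upd (N j) (t%:Z - j.+1%:Z) (Ms t).
    move=> j; apply: funext => r; rewrite /upd /N.
    case: (boolP (r == t%:Z - j.+1%:Z)) => [/eqP ->|hr].
      by case: ifP => //; lia.
    case: ifP => h1; case: ifP => h2 //; exfalso; lia.
  have Nin : forall j : nat, forall s : int, t%:Z - 1 - H%:Z <= s <= t%:Z ->
      inMset B kappa gamma (N j s).
    move=> j s /andP[h1 h2]; rewrite /N; case: ifP => _; first exact: inM.
    apply: inMz; lia.
  have tele : forall j : nat, (j <= m)%N ->
      Fsur A B K w c t (N 0%N) - Fsur A B K w c t (N j)
      <= Lc * \sum_(1 <= i < j.+1) frob (Ms (t%:Z - i%:Z) - Ms t).
    elim=> [|j IH] hj.
      by rewrite subrr big_geq ?mulr0.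
    rewrite big_nat_recr //= mulrDr.
    have := hlip j.+1 t _ hT (N j) (Ms t) (Nin j) (inM t hT).
    rewrite -Nstep => /(_ _); have hjH : (j.+1 <= H.+1)%N by move: hj; rewrite /m; lia.
    move=> /(_ hjH).
    have -> : N j (t%:Z - j.+1%:Z) = Ms (t%:Z - j.+1%:Z) by rewrite /N; case: ifP => //; lia.
    move=> h.
    have := IH (ltnW hj).
    have := ler_norm (Fsur A B K w c t (N j) - Fsur A B K w c t (N j.+1)).
    lra.
  have := tele m (leqnn m).
  rewrite N0.
  have -> : Fsur A B K w c t (N m) = fsur A B K w c t (Ms t).
    rewrite /fsur; apply: Fsur_dep => // s h1 h2 h3; rewrite /N.
    case: ifP => // h.
    case: (boolP (s == t%:Z)) => [/eqP -> //|hs].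
    exfalso; move: h; rewrite /m; lia.
  done.
have gradpart : forall t : nat, (t < T)%N ->
    fsur A B K w c t (Ms t) - fsur A B K w c t M <= frob_inner (g t) (Ms t - M).
  move=> t hT; apply: grad_ineq (hgrad t hT) => X Y a ha.
  exact: fsur_conv (hcv t) ha.
pose d (t : nat) := frob (Ms t - M) ^+ 2.
pose d' (t : nat) := frob (Ms t - eta *: g t - M) ^+ 2.
have ident : forall t : nat, frob_inner (g t) (Ms t - M)
    = (d t - d' t) / (2 * eta) + eta / 2 * frob (g t) ^+ 2.
  move=> t; rewrite /d /d'.
  have -> : Ms t - eta *: g t - M = (Ms t - M) + (- eta) *: g t by meq.
  rewrite (frob_sqD (Ms t - M) ((- eta) *: g t)) frobZ exprMn normrN real_normK ?num_real // fiZr fiC.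
  field; lra.
pose S (t : nat) := \sum_(1 <= i < (minn H.+1 t).+1) \sum_(1 <= k < i.+1) frob (g (t%:Z - k%:Z)).
have per : forall t : nat, (t < T)%N ->
    Fsur A B K w c t Ms - fsur A B K w c t M
    <= Lc * eta * S t + (d t - d' t) / (2 * eta) + eta / 2 * frob (g t) ^+ 2.
  move=> t hT.
  have h1 := lip t hT; have h2 := gradpart t hT; rewrite ident in h2.
  have h3 : Lc * \sum_(1 <= i < (minn H.+1 t).+1) frob (Ms (t%:Z - i%:Z) - Ms t)
      <= Lc * eta * S t.
    rewrite -mulrA; apply: ler_wpM2l; first exact: ltW.
    rewrite /S mulr_sumr; apply: ler_sum_nat => i /andP[hi1 hi2].
    apply: drift => //; lia.
  lra.
have dle : forall s : nat, (s.+1 < T)%N -> d s.+1 <= d' s.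
  move=> s hs; rewrite /d /d'.
  have := @proj_le _ _ _ _ B kappa gamma _ _ _ (hogd s hs) hM.
  by move=> h; rewrite ler_pXn2r ?nnegrE ?frob_ge0.
have tel : \sum_(t < T) (d t - d' t) <= d 0%N.
  case Te : T => [|T'].
    by rewrite big_ord0 /d sqr_ge0.
  have dle' : forall s : nat, (s.+1 < T'.+1)%N -> d s.+1 <= d' s by rewrite -Te.
  have cl : forall n : nat, (n < T'.+1)%N -> \sum_(t < n.+1) (d t - d' t) <= d 0%N - d' n.
    elim=> [|n IH] hn; first by rewrite big_ord1.
    rewrite big_ord_recr /=.
    exact: ar1 (IH (ltnW hn)) (dle' n hn).
  by apply: ar2 (cl T' (ltnSn T')) _; rewrite /d' sqr_ge0.
have d0 : d 0%N <= D ^+ 2.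
  by apply: diam => //; apply: hinit; lia.
rewrite -sumrB.
apply: le_trans (ler_sum _ (fun (t : 'I_T) _ => per t (ltn_ord t))) _.
rewrite !big_split /= -!mulr_sumr -mulr_suml.
apply: lerD; last by [].
apply: lerD; first by [].
by apply: ler_wpM2r; [rewrite invr_ge0 mulr_ge0 // ltW | exact: le_trans tel d0].
Qed.
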